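(* Let $K$ be a field, $f\colon R\to S$ a morphism of Zinbiel algebras, $l\ge1$, and let $\Theta_t=\theta_0+\theta_lt^l+\theta_{l+1}t^{l+1}+\cdots$ (so $\theta_1=\dots=\theta_{l-1}=0$) be a deformation of $f$ such that $\theta_l$ is a $2$-coboundary in $C^2_{\mathrm{Zinb}}(f,f)$. Then there exists a formal isomorphism of $f$ of the form $\Phi_t=(\mathrm{Id}_R+\phi_Rt^l;\ \mathrm{Id}_S+\phi_St^l)$ with $\phi_R\in\mathrm{Hom}_K(R,R)$, $\phi_S\in\mathrm{Hom}_K(S,S)$, such that the deformation $\overline{\Theta}_t=\sum_{i\ge0}\overline{\theta}_it^i:=\Phi_t\Theta_t\Phi_t^{-1}$ satisfies $\overline{\theta}_i=0$ for $1\le i\le l$.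
   Context: A Zinbiel algebra over $K$ is a $K$-vector space $R$ with bilinear product $x\cdot y$ (also written $m_R(x,y)$) satisfying $(x\cdot y)\cdot z=x\cdot(y\cdot z)+x\cdot(z\cdot y)$. A morphism $f\colon R\to S$ is a linear map with $f(x\cdot y)=f(x)\cdot f(y)$. $R$ is a bimodule over itself, $S$ over itself, and $S$ is an $R$-bimodule via $r\cdot s=f(r)\cdot s$, $s\cdot r=s\cdot f(r)$. For a bimodule $A$ over $R$ and $1\le n\le4$, $C^n_{\mathrm{Zinb}}(R,A)=\mathrm{Hom}_K(R^{\otimes n},A)$ with $(d^1\varphi)(x,y)=x\cdot\varphi(y)-\varphi(x\cdot y)+\varphi(x)\cdot y$, $(d^2\varphi)(x,y,z)=x\cdot(\varphi(y,z)+\varphi(z,y))-\varphi(x\cdot y,z)+\varphi(x,y\cdot z+z\cdot y)-\varphi(x,y)\cdot z$, $(d^3\varphi)(x,y,z,w)=x\cdot\{\varphi(y,z,w)-\varphi(z,w,y)+\varphi(z,y,w)-\varphi(w,z,y)\}-\varphi(x\cdot y,z,w)+\varphi(x,y\cdot z+z\cdot y,w)-\varphi(x,y,z\cdot w+w\cdot z)+\varphi(x,y,z)\cdot w$. The deformation complex: $C^0_{\mathrm{Zinb}}(R,S)=0$, $d^0=0$, $C^n_{\mathrm{Zinb}}(f,f)=C^n_{\mathrm{Zinb}}(R,R)\times C^n_{\mathrm{Zinb}}(S,S)\times C^{n-1}_{\mathrm{Zinb}}(R,S)$ ($1\le n\le4$), $d^i_f(\xi;\pi;\varphi)=(d^i\xi;d^i\pi;f\xi-\pi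 f-d^{i-1}\varphi)$ with $(f\xi)(x_1,\dots)=f(\xi(x_1,\dots))$, $(\pi f)(x_1,\dots)=\pi(f(x_1),\dots)$. Elements of $C^1_{\mathrm{Zinb}}(f,f)$ are pairs $(\xi;\pi)$; a $2$-coboundary is an element $d^1_f(\xi;\pi)$. A deformation of $f$ is a formal power series $\Theta_t=\sum_{i\ge0}\theta_it^i$ with $\theta_0=(m_R;m_S;f)$ and $\theta_i=(m_{R,i};m_{S,i};f_i)\in C^2_{\mathrm{Zinb}}(f,f)$, such that for $*=R,S$ the bilinear map $M_{*,t}=\sum_i m_{*,i}t^i$ satisfies $M_{*,t}(M_{*,t}(x,y),z)=M_{*,t}(x,M_{*,t}(y,z))+M_{*,t}(x,M_{*,t}(z,y))$, and $F_t=\sum_if_it^i$ satisfies $F_t(M_{R,t}(x,y))=M_{S,t}(F_t(x),F_t(y))$. A formal isomorphism of $f$ is $\Phi_t=(\Phi_{R,t};\Phi_{S,t})=\sum_{i\ge0}(\phi_{R,i};\phi_{S,i})t^i$ with $(\phi_{R,0};\phi_{S,0})=(\mathrm{Id}_R;\mathrm{Id}_S)$ and $\phi_{R,i}\in\mathrm{Hom}_K(R,R)$, $\phi_{S,i}\in\mathrm{Hom}_K(S,S)$. For a deformation $\Theta_t=(M_{R,t};M_{S,t};F_t)$, $\Phi_t\Theta_t\Phi_t^{-1}$ is the deformation $(\Phi_{R,t}M_{R,t}\Phi_{R,t}^{-1};\ \Phi_{S,t}M_{S,t}\Phi_{S,t}^{-1};\ \Phi_{S,t}F_t\Phi_{R,t}^{-1})$,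 where $(\Phi M\Phi^{-1})(x,y)=\Phi(M(\Phi^{-1}x,\Phi^{-1}y))$. *)

(* Defs.v *)
From mathcomp Require Import all_boot all_order all_algebra.
Set Implicit Arguments. Unset Strict Implicit. Unset Printing Implicit Defensive.
Import GRing.Theory.
Local Open Scope ring_scope.

Section ZinbDefs.
Variable K : fieldType.

Definition bilin (U V : lmodType K) (m : U -> U -> V) : Prop :=
  (forall x, linear (m x)) /\ (forall y, linear (fun x => m x y)).

Definition zinbiel (R : lmodType K) (m : R -> R -> R) : Prop :=
  bilin m /\ forall x y z, m (m x y) z = m x (m y z) + m x (m z y).

Definition zinb_morph (R S : lmodType K) (mR : R -> R -> R) (mS : S -> S -> S)
  (f : R -> S) : Prop :=
  linear f /\ forall x y, f (mR x y) = mS (f x) (f y).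

(* Zinbiel coboundary d^1 : C^1(R,A) -> C^2(R,A) for A = R over itself *)
Definition d1 (R : lmodType K) (m : R -> R -> R) (xi : R -> R) : R -> R -> R :=
  fun x y => m x (xi y) - xi (m x y) + m (xi x) y.

(* A formal power series sum_i a_i t^i is represented by its coefficient
   sequence a : nat -> _.  Coefficient n of M_t(M_t(x,y),z) etc. *)
Definition zinb_series (R : lmodType K) (M : nat -> R -> R -> R) : Prop :=
  forall n x y z,
    \sum_(i < n.+1) M i (M (n - i)%N x y) z =
    \sum_(i < n.+1) (M i x (M (n - i)%N y z) + M i x (M (n - i)%N z y)).

(* coefficient n of F_t(M_{R,t}(x,y)) = M_{S,t}(F_t x, F_t y) *)
Definition morph_series (R S : lmodType K) (MR : nat -> R -> R -> R)
  (MS : nat -> S -> S -> S) (F : nat -> R -> S) : Prop :=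
  forall n x y,
    \sum_(i < n.+1) F i (MR (n - i)%N x y) =
    \sum_(i < n.+1) \sum_(j < n.+1) \sum_(k < n.+1)
       (if (i + j + k == n)%N then MS i (F j x) (F k y) else 0).

Definition is_deformation (R S : lmodType K) (mR : R -> R -> R) (mS : S -> S -> S)
  (f : R -> S) (MR : nat -> R -> R -> R) (MS : nat -> S -> S -> S)
  (F : nat -> R -> S) : Prop :=
  [/\ MR 0%N = mR, MS 0%N = mS & F 0%N = f] /\
  [/\ forall i, bilin (MR i), forall i, bilin (MS i) & forall i, linear (F i)] /\
  [/\ zinb_series MR, zinb_series MS & morph_series MR MS F].

(* The formal isomorphism component Id + phi t^l, as a coefficient sequence *)
Definition fiso (R : lmodType K) (l : nat) (phi : R -> R) : nat -> R -> R :=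
  fun n => if n == 0%N then id else if n == l then phi else (fun _ => 0).

(* Its formal inverse (Id + phi t^l)^{-1} = sum_k (-phi)^k t^{kl}  (l >= 1) *)
Definition fiso_inv (R : lmodType K) (l : nat) (phi : R -> R) : nat -> R -> R :=
  fun n => if (l %| n)%N then iter (n %/ l) (fun g x => - phi (g x)) id
           else (fun _ => 0).

(* coefficient n of Phi (M (Phi^{-1} x, Phi^{-1} y)) *)
Definition conj_mult (R : lmodType K) (Phi Psi : nat -> R -> R)
  (M : nat -> R -> R -> R) : nat -> R -> R -> R :=
  fun n x y => \sum_(a < n.+1) \sum_(b < n.+1) \sum_(c < n.+1) \sum_(d < n.+1)
     (if (a + b + c + d == n)%N then Phi a (M b (Psi c x) (Psi d y)) else 0).

(* coefficient n of Phi_S (F (Phi_R^{-1} x)) *)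
Definition conj_map (R S : lmodType K) (PhiS : nat -> S -> S) (PsiR : nat -> R -> R)
  (F : nat -> R -> S) : nat -> R -> S :=
  fun n x => \sum_(a < n.+1) \sum_(b < n.+1) \sum_(c < n.+1)
     (if (a + b + c == n)%N then PhiS a (F b (PsiR c x)) else 0).

End ZinbDefs.

(* Main.v *)
Require Import Defs.
From mathcomp Require Import all_boot all_order all_algebra.
From mathcomp Require Import zify.
From Stdlib Require Import FunctionalExtensionality.
Import GRing.Theory.
Set Implicit Arguments. Unset Strict Implicit.
Local Open Scope ring_scope.

Section Aux.
Variable K : fieldType.

Lemma linB' (U V : lmodType K) (f : U -> V) : linear f -> forall x y, f (x - y) = f x - f y.
Proof. by move=> Lf; apply: (zmod_morphism_linear Lf). Qed.

Lemma lin0' (U V : lmodType K) (f : U -> V) : linear f -> f 0 = 0.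
Proof. by move=> Lf; rewrite -(subrr 0) (linB' Lf) subrr. Qed.

Lemma linN' (U V : lmodType K) (f : U -> V) : linear f -> forall x, f (- x) = - f x.
Proof. by move=> Lf x; rewrite -sub0r (linB' Lf) (lin0' Lf) sub0r. Qed.

Lemma linD' (U V : lmodType K) (f : U -> V) : linear f -> forall x y, f (x + y) = f x + f y.
Proof. by move=> Lf x y; rewrite -{1}[y]opprK (linB' Lf) (linN' Lf) opprK. Qed.

Lemma sumL1 (V : zmodType) n (G : 'I_n.+1 -> V) :
  (forall a : 'I_n.+1, (0 < a)%N -> G a = 0) -> \sum_(a < n.+1) G a = G ord0.
Proof.
move=> H; rewrite (bigD1 ord0) // big1 => [|a a0]; first exact: addr0.
apply: H.
by rewrite lt0n; apply: contra a0 => /eqP a0; apply/eqP/val_inj.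
Qed.

Lemma sumL2 (V : zmodType) n l (G : 'I_n.+1 -> V) :
  (forall a : 'I_n.+1, (0 < a < l)%N -> G a = 0) -> (n < l)%N ->
  \sum_(a < n.+1) G a = G ord0.
Proof.
move=> H nl; apply: sumL1 => a a0; apply: H; rewrite a0 /=.
by have := ltn_ord a; lia.
Qed.

Lemma sumL3 (V : zmodType) l (G : 'I_l.+1 -> V) :
  (0 < l)%N -> (forall a : 'I_l.+1, (0 < a < l)%N -> G a = 0) ->
  \sum_(a < l.+1) G a = G ord0 + G ord_max.
Proof.
move=> l0 H; rewrite (bigD1 ord0) // (bigD1 ord_max) /=; last first.
  by apply/eqP => /(congr1 val) /=; lia.
rewrite big1 => [|a /andP[a0 am]]; first by rewrite /= ?ord0E ?ordmaxE addr0.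
apply: H.
have a0' : (nat_of_ord a != 0%N) by apply: contra a0 => /eqP a0; apply/eqP/val_inj.
have am' : (nat_of_ord a != l) by apply: contra am => /eqP a1; apply/eqP/val_inj.
by have := ltn_ord a; lia.
Qed.

Lemma ord0E n : nat_of_ord (@ord0 n) = 0%N. Proof. by []. Qed.
Lemma ordmaxE n : nat_of_ord (@ord_max n) = n. Proof. by []. Qed.

Section Fiso.
Variables (U : lmodType K) (l : nat) (phi : U -> U).
Hypothesis l1 : (1 <= l)%N.

Lemma fiso0 : fiso l phi 0%N = id. Proof. by []. Qed.
Lemma fisol : fiso l phi l = phi.
Proof. by rewrite /fiso ifF ?eqxx //; apply/eqP; lia. Qed.
Lemma fisoZ a : (0 < a < l)%N -> fiso l phi a = fun _ => 0.
Proof. by move=> h; rewrite /fiso ifF ?ifF //; apply/eqP; lia. Qed.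
Lemma finv0 : fiso_inv l phi 0%N = id.
Proof. by rewrite /fiso_inv dvdn0 div0n. Qed.
Lemma finvl : fiso_inv l phi l = fun x => - phi x.
Proof. by rewrite /fiso_inv dvdnn divnn l1. Qed.
Lemma finvZ a : (0 < a < l)%N -> fiso_inv l phi a = fun _ => 0.
Proof.
move=> h; rewrite /fiso_inv ifF //; apply/negbTE/negP => /dvdn_leq; lia.
Qed.
End Fiso.

Lemma bil0l (U V : lmodType K) (m : U -> U -> V) : bilin m -> forall y, m 0 y = 0.
Proof. by case=> _ h y; exact: (lin0' (h y)). Qed.
Lemma bil0r (U V : lmodType K) (m : U -> U -> V) : bilin m -> forall x, m x 0 = 0.
Proof. by case=> h _ x; exact: (lin0' (h x)). Qed.
Lemma bilNl (U V : lmodType K) (m : U -> U -> V) : bilin m -> forall x y, m (- x) y = - m x y.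
Proof. by case=> _ h x y; exact: (linN' (h y)). Qed.
Lemma bilNr (U V : lmodType K) (m : U -> U -> V) : bilin m -> forall x y, m x (- y) = - m x y.
Proof. by case=> h _ x y; exact: (linN' (h x)). Qed.

Lemma cm_small (U : lmodType K) (M : nat -> U -> U -> U) phi l i :
  (1 <= l)%N -> (forall b, bilin (M b)) -> linear phi ->
  (forall b, (1 <= b < l)%N -> M b = fun _ _ => 0) -> (1 <= i < l)%N ->
  forall x y, conj_mult (fiso l phi) (fiso_inv l phi) M i x y = 0.
Proof.
move=> l1 bM lphi HM hi x y; rewrite /conj_mult.
apply: big1 => a _; apply: big1 => b _; apply: big1 => c _; apply: big1 => d _.
case: ifP => // /eqP E.
have [a0|apos] := posnP a; last by rewrite fisoZ //; lia.
rewrite a0 fiso0 /=.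
have [c0|cpos] := posnP c; last by rewrite finvZ //; [exact: bil0l | lia].
rewrite c0 finv0.
have [d0|dpos] := posnP d; last by rewrite finvZ //; [exact: bil0r | lia].
rewrite d0 finv0 /=.
have -> : nat_of_ord b = i by lia.
by rewrite HM.
Qed.

Lemma cm_l (U : lmodType K) (M : nat -> U -> U -> U) phi l :
  (1 <= l)%N -> (forall b, bilin (M b)) -> linear phi ->
  (forall b, (1 <= b < l)%N -> M b = fun _ _ => 0) ->
  forall x y, conj_mult (fiso l phi) (fiso_inv l phi) M l x y =
    phi (M 0%N x y) + (M l x y + M 0%N (- phi x) y + M 0%N x (- phi y)).
Proof.
move=> l1 bM lphi HM x y; rewrite /conj_mult.
rewrite (@sumL3 _ l _ l1); last first.
  move=> a ha; apply: big1 => b _; apply: big1 => c _; apply: big1 => d _.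
  by case: ifP => // _; rewrite fisoZ.
rewrite /= ?ord0E ?ordmaxE fiso0.
rewrite [X in _ + X = _]sumL1; last first.
  move=> b hb; apply: big1 => c _; apply: big1 => d _; rewrite ifF //; apply/eqP; lia.
rewrite [X in _ + X = _]sumL1; last first.
  move=> c hc; apply: big1 => d _; rewrite ifF //; apply/eqP; lia.
rewrite [X in _ + X = _]sumL1; last first.
  by move=> d hd; rewrite ifF //; apply/eqP; lia.
rewrite /= ?ord0E ?ordmaxE !addn0 eqxx (fisol _ l1) finv0.
rewrite (@sumL3 _ l _ l1); last first.
  move=> b hb; apply: big1 => c _; apply: big1 => d _.
  by case: ifP => // _; rewrite HM.
rewrite /= ?ord0E ?ordmaxE.
rewrite [X in _ + X + _ = _]sumL1; last first.
  move=> c hc; apply: big1 => d _; rewrite ifF //; apply/eqP; lia.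
rewrite [X in _ + X + _ = _]sumL1; last first.
  by move=> d hd; rewrite ifF //; apply/eqP; lia.
rewrite (@sumL3 _ l _ l1); last first.
  move=> c hc; apply: big1 => d _.
  by case: ifP => // _; rewrite finvZ //; exact: bil0l.
rewrite /= ?ord0E ?ordmaxE.
rewrite [X in _ + X + _ + _ = _]sumL1; last first.
  by move=> d hd; rewrite ifF //; apply/eqP; lia.
rewrite (@sumL3 _ l _ l1); last first.
  move=> d hd.
  by case: ifP => // _; rewrite (finvZ _ l1 hd); exact: bil0r.
rewrite /= ?ord0E ?ordmaxE !addn0 !add0n eqxx ifF; last by apply/eqP; lia.
rewrite !finv0 !(finvl _ l1).
rewrite add0r addrC; congr (_ + _).
by rewrite addrC [M 0%N x _ + _]addrC addrA.
Qed.

Lemma cmap_small (U W : lmodType K) (F : nat -> U -> W) phiR phiS l i :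
  (1 <= l)%N -> (forall b, linear (F b)) ->
  (forall b, (1 <= b < l)%N -> F b = fun _ => 0) -> (1 <= i < l)%N ->
  forall x, conj_map (fiso l phiS) (fiso_inv l phiR) F i x = 0.
Proof.
move=> l1 lF HF hi x; rewrite /conj_map.
apply: big1 => a _; apply: big1 => b _; apply: big1 => c _.
case: ifP => // /eqP E.
have [a0|apos] := posnP a; last by rewrite fisoZ //; lia.
rewrite a0 fiso0 /=.
have [c0|cpos] := posnP c; last first.
  by rewrite (finvZ _ l1 (_ : (0 < c < l)%N)); [exact: lin0' | lia].
rewrite c0 finv0.
have -> : nat_of_ord b = i by lia.
by rewrite HF.
Qed.

Lemma cmap_l (U W : lmodType K) (F : nat -> U -> W) phiR phiS l :
  (1 <= l)%N -> (forall b, linear (F b)) ->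
  (forall b, (1 <= b < l)%N -> F b = fun _ => 0) ->
  forall x, conj_map (fiso l phiS) (fiso_inv l phiR) F l x =
    phiS (F 0%N x) + (F l x + F 0%N (- phiR x)).
Proof.
move=> l1 lF HF x; rewrite /conj_map.
rewrite (@sumL3 _ l _ l1); last first.
  move=> a ha; apply: big1 => b _; apply: big1 => c _.
  by case: ifP => // _; rewrite fisoZ.
rewrite /= ?ord0E ?ordmaxE fiso0.
rewrite [X in _ + X = _]sumL1; last first.
  move=> b hb; apply: big1 => c _; rewrite ifF //; apply/eqP; lia.
rewrite [X in _ + X = _]sumL1; last first.
  by move=> c hc; rewrite ifF //; apply/eqP; lia.
rewrite /= ?ord0E ?ordmaxE !addn0 eqxx (fisol _ l1) finv0.
rewrite (@sumL3 _ l _ l1); last first.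
  move=> b hb; apply: big1 => c _.
  by case: ifP => // _; rewrite HF.
rewrite /= ?ord0E ?ordmaxE.
rewrite [X in _ + X + _ = _]sumL1; last first.
  by move=> c hc; rewrite ifF //; apply/eqP; lia.
rewrite (@sumL3 _ l _ l1); last first.
  move=> c hc.
  by case: ifP => // _; rewrite (finvZ _ l1 hc); exact: lin0'.
rewrite /= ?ord0E ?ordmaxE !addn0 !add0n eqxx ifF; last by apply/eqP; lia.
rewrite !finv0 !(finvl _ l1).
by rewrite add0r addrC [F l x + _]addrC.
Qed.

End Aux.

Theorem theorem4p1 (K : fieldType) (R S : lmodType K)
  (mR : R -> R -> R) (mS : S -> S -> S) (f : R -> S) (l : nat)
  (MR : nat -> R -> R -> R) (MS : nat -> S -> S -> S) (F : nat -> R -> S) :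
  zinbiel mR -> zinbiel mS -> zinb_morph mR mS f ->
  (1 <= l)%N ->
  is_deformation mR mS f MR MS F ->
  (forall i, (1 <= i < l)%N -> [/\ MR i = (fun _ _ => 0), MS i = (fun _ _ => 0)
                                  & F i = (fun _ => 0)]) ->
  (exists (xi : R -> R) (pi : S -> S), linear xi /\ linear pi /\
     [/\ MR l = d1 mR xi, MS l = d1 mS pi & F l = (fun x => f (xi x) - pi (f x))]) ->
  exists (phiR : R -> R) (phiS : S -> S), linear phiR /\ linear phiS /\
    forall i, (1 <= i <= l)%N ->
      [/\ conj_mult (fiso l phiR) (fiso_inv l phiR) MR i = (fun _ _ => 0),
          conj_mult (fiso l phiS) (fiso_inv l phiS) MS i = (fun _ _ => 0)
        & conj_map (fiso l phiS) (fiso_inv l phiR) F i = (fun _ => 0)].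
Proof.
move=> zR zS fm l1 [[MR0 MS0 F0] [[bR bS lF] _]] Hz [xi [pi [lxi [lpi [EMR EMS EF]]]]].
exists xi, pi; split=> //; split=> // i /andP[i1 il].
have HR b (hb : (1 <= b < l)%N) : MR b = (fun _ _ => 0) by case: (Hz b hb).
have HS b (hb : (1 <= b < l)%N) : MS b = (fun _ _ => 0) by case: (Hz b hb).
have HF b (hb : (1 <= b < l)%N) : F b = (fun _ => 0) by case: (Hz b hb).
have [ilt|ige] := ltnP i l.
  have hi : (1 <= i < l)%N by rewrite i1 ilt.
  split; apply: functional_extensionality => x; try apply: functional_extensionality => y.
  - exact: cm_small.
  - exact: cm_small.
  - exact: cmap_small.
have -> : i = l by apply/eqP; rewrite eqn_leq il ige.
split; apply: functional_extensionality => x; try apply: functional_extensionality => y.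
- rewrite cm_l // EMR MR0 /d1 (bilNl zR.1) (bilNr zR.1).
  by rewrite addrK addrAC subrr add0r subrr.
- rewrite cm_l // EMS MS0 /d1 (bilNl zS.1) (bilNr zS.1).
  by rewrite addrK addrAC subrr add0r subrr.
- rewrite cmap_l // EF F0 (linN' fm.1).
  by rewrite addrAC subrr add0r subrr.
Qed.
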